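(* Let $\mathbb{X}$ be a smooth Banach space and $\mathbb{Y}$ an $n$-dimensional subspace of $\mathbb{X}$. Then $\mathbb{Y}$ is coproximinal if and only if $\dim\operatorname{span}\{y^*\in S_{\mathbb{X}^*}: y^*\in J(y),\ y\in\mathbb{Y}\}=n$.
   Context: For $y\neq 0$, $J(y)=\{f\in\mathbb{X}^*:\|f\|=1,f(y)=\|y\|\}$; $\mathbb{X}$ is smooth if $J(y)$ is a singleton for every unit vector $y$. $S_{\mathbb{X}^*}$ is the unit sphere of $\mathbb{X}^*$. Given $x\in\mathbb{X}$, $y_0\in\mathbb{Y}$ is a best coapproximation to $x$ out of $\mathbb{Y}$ if $\|y_0-y\|\le\|x-y\|$ for all $y\in\mathbb{Y}$; $\mathbb{Y}$ is coproximinal if every $x\in\mathbb{X}$ has a best coapproximation out of $\mathbb{Y}$. *)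

(* Defs.v *)
From HB Require Import structures.
From mathcomp Require Import all_boot all_order all_algebra.
From mathcomp Require Import all_classical all_reals all_analysis.
Set Implicit Arguments. Unset Strict Implicit. Unset Printing Implicit Defensive.
Import Order.TTheory GRing.Theory Num.Theory.
Import numFieldNormedType.Exports.
Local Open Scope classical_set_scope.
Local Open Scope ring_scope.

Section Defs.
Variables (R : realType) (X : normedModType R).

Definition lin_subspace (Y : set X) : Prop :=
  Y 0 /\ forall (a : R) (x y : X), Y x -> Y y -> Y (a *: x + y).

Definition vspan (S : set X) : set X :=
  [set v | exists (k : nat) (c : 'I_k -> R) (s : 'I_k -> X),
      (forall i, S (s i)) /\ v = \sum_(i < k) c i *: s i].

Definition vlin_indep (n : nat) (b : 'I_n -> X) : Prop :=
  forall c : 'I_n -> R, \sum_(i < n) c i *: b i = 0 -> forall i, c i = 0.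

Definition vdim_span (S : set X) (n : nat) : Prop :=
  exists b : 'I_n -> X, vlin_indep b /\ vspan S = vspan (range b).

Definition is_dual (f : X -> R) : Prop :=
  (forall (a : R) (x y : X), f (a *: x + y) = a * f x + f y) /\ continuous f.

Definition dnorm (f : X -> R) : R :=
  sup [set `|f x| | x in [set x : X | `|x| <= 1]].

Definition dual_sphere : set (X -> R) := [set f | is_dual f /\ dnorm f = 1].

Definition J (y : X) : set (X -> R) :=
  [set f | dual_sphere f /\ f y = `|y|].

Definition smooth : Prop :=
  forall y : X, `|y| = 1 -> exists f, J y = [set f].

Definition fspan (S : set (X -> R)) : set (X -> R) :=
  [set g | exists (k : nat) (c : 'I_k -> R) (s : 'I_k -> (X -> R)),
      (forall i, S (s i)) /\ g = (fun x => \sum_(i < k) c i * s i x)].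

Definition flin_indep (n : nat) (b : 'I_n -> (X -> R)) : Prop :=
  forall c : 'I_n -> R, (fun x => \sum_(i < n) c i * b i x) = (fun _ => 0) ->
    forall i, c i = 0.

Definition fdim_span (S : set (X -> R)) (n : nat) : Prop :=
  exists b : 'I_n -> (X -> R), flin_indep b /\ fspan S = fspan (range b).

Definition best_coapprox (Y : set X) (x y0 : X) : Prop :=
  Y y0 /\ forall y, Y y -> `|y0 - y| <= `|x - y|.

Definition coproximinal (Y : set X) : Prop :=
  forall x : X, exists y0, best_coapprox Y x y0.

(* { y^* in S_{X^*} : y^* in J(y), y in Y }  (J is defined for y <> 0) *)
Definition J_set (Y : set X) : set (X -> R) :=
  [set f | dual_sphere f /\ exists y, Y y /\ y <> 0 /\ J y f].

End Defs.

(* Main.v *)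
Require Import Defs.
From HB Require Import structures.
From mathcomp Require Import all_boot all_order all_algebra.
From mathcomp Require Import all_classical all_reals all_analysis.
From mathcomp Require Import ring lra.
Import Order.TTheory GRing.Theory Num.Theory.
Import numFieldNormedType.Exports.
Local Open Scope classical_set_scope.
Local Open Scope ring_scope.
Set Implicit Arguments. Unset Strict Implicit. Unset Printing Implicit Defensive.

Section MX.
Variable F : fieldType.

Lemma left_ker m n (A : 'M[F]_(m, n)) : (\rank A < m)%N ->
  exists u : 'rV_m, u != 0 /\ u *m A = 0.
Proof.
move=> hr.
have hk : kermx A != 0.
  by rewrite -mxrank_eq0 mxrank_ker -lt0n subn_gt0.
have [i hi] : exists i, row i (kermx A) != 0.
  apply/existsP; apply: contraR hk; rewrite negb_exists => /forallP h.
  by apply/eqP/row_matrixP => i; rewrite row0; apply/eqP; have := h i; rewrite negbK.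
exists (row i (kermx A)); split => //.
by apply/sub_kermxP; exact: row_sub.
Qed.

Lemma F1 k n (m : 'I_k -> 'I_n -> F) : (k < n)%N ->
  exists c : 'I_n -> F, (exists j, c j != 0) /\ forall i, \sum_j m i j * c j = 0.
Proof.
move=> hkn; pose A := \matrix_(i, j) m i j.
have hr : (\rank A^T < n)%N by apply: leq_ltn_trans (rank_leq_col _) hkn.
have [u [u0 hu]] := left_ker hr.
exists (fun j => u 0 j); split.
  apply/existsP; apply: contraR u0; rewrite negb_exists => /forallP h.
  apply/eqP/matrixP => i j; rewrite mxE (ord1 i); apply/eqP.
  by have := h j; rewrite negbK.
move=> i; transitivity ((u *m A^T) 0 i); last by rewrite hu mxE.
by rewrite mxE; apply: eq_bigr => j _; rewrite !mxE mulrC.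
Qed.

Lemma F2 n (m : 'I_n -> 'I_n -> F) :
  (forall a : 'I_n -> F, (forall j, \sum_i a i * m i j = 0) -> forall i, a i = 0) ->
  forall v : 'I_n -> F, exists a : 'I_n -> F, forall j, \sum_i a i * m i j = v j.
Proof.
move=> hk v; pose A := \matrix_(i, j) m i j.
have hf : row_free A.
  apply: contraT; rewrite /row_free => hr.
  have hr' : (\rank A < n)%N by rewrite ltn_neqAle hr rank_leq_row.
  have [u [u0 hu]] := left_ker hr'.
  have h := hk (fun i => u 0 i).
  case/negP: u0; apply/eqP/matrixP => i j; rewrite mxE (ord1 i).
  apply: h => j'; transitivity ((u *m A) 0 j'); last by rewrite hu mxE.
  by rewrite mxE; apply: eq_bigr => l _; rewrite mxE.
have hu : A \in unitmx by rewrite -row_free_unit.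
pose w := \row_j v j.
exists (fun i => (w *m invmx A) 0 i) => j.
transitivity ((w *m invmx A *m A) 0 j); last by rewrite mulmxKV // mxE.
by rewrite [RHS]mxE; apply: eq_bigr => l _; rewrite [A _ _]mxE.
Qed.

End MX.

Section PartA.
Variables (R : realType) (X : normedModType R).

Definition lin (f : X -> R) := forall (a : R) (x y : X), f (a *: x + y) = a * f x + f y.

Lemma lin0 f : lin f -> f 0 = 0.
Proof.
move=> h; have := h 1 0 0; rewrite scale1r addr0 mul1r.
by rewrite -{1}(addr0 (f 0)) => /addrI.
Qed.

Lemma linZ f a x : lin f -> f (a *: x) = a * f x.
Proof. by move=> h; have := h a x 0; rewrite addr0 lin0 // addr0. Qed.

Lemma linD f x y : lin f -> f (x + y) = f x + f y.
Proof. by move=> h; have := h 1 x y; rewrite scale1r mul1r. Qed.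

Lemma linN f x : lin f -> f (- x) = - f x.
Proof. by move=> h; rewrite -scaleN1r linZ // mulN1r. Qed.

Lemma linB f x y : lin f -> f (x - y) = f x - f y.
Proof. by move=> h; rewrite linD // linN. Qed.

Lemma linsum f k (c : 'I_k -> R) (s : 'I_k -> X) : lin f ->
  f (\sum_(i < k) c i *: s i) = \sum_(i < k) c i * f (s i).
Proof.
move=> h; elim: k c s => [|k IH] c s; first by rewrite !big_ord0 lin0.
by rewrite !big_ord_recr /= linD // linZ // IH.
Qed.

Lemma bound_sphere f : @dual_sphere R X f -> forall x, `|f x| <= `|x|.
Proof.
move=> [[hl hc] hd] x.
set S := [set `|f x| | x in [set x : X | `|x| <= 1]].
have hs : has_sup S.
  apply: contrapT => /sup_out; rewrite /dnorm in hd; rewrite -/S hd => /eqP.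
  by rewrite oner_eq0.
have [->|x0] := eqVneq x 0; first by rewrite lin0 // normr0.
have nx : 0 < `|x| by rewrite normr_gt0.
have nxi : 0 <= `|x|^-1 by rewrite invr_ge0 ltW.
have hS : S (`|f (`|x|^-1 *: x)|).
  exists (`|x|^-1 *: x) => //=.
  rewrite normrZ (ger0_norm nxi) mulVf // ?gt_eqF //.
have := sup_upper_bound hs hS.
rewrite /dnorm -/S in hd; rewrite hd linZ // normrM (ger0_norm nxi).
by rewrite mulrC -ler_pdivlMr ?invr_gt0 // invrK mul1r.
Qed.


Lemma normVZ (y : X) : y != 0 -> `| `|y|^-1 *: y | = 1.
Proof.
move=> y0; have ny : 0 < `|y| by rewrite normr_gt0.
by rewrite normrZ ger0_norm ?invr_ge0 ?(ltW ny) // mulVf // gt_eqF.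
Qed.

Lemma J_scale (y : X) f : y != 0 -> J y f -> J (`|y|^-1 *: y) f.
Proof.
move=> y0 [[[hl hc] hd] hy]; split; first by split.
have ny : 0 < `|y| by rewrite normr_gt0.
by rewrite normVZ // linZ // hy mulVf // gt_eqF.
Qed.

Lemma J_ex (y : X) : smooth X -> y != 0 -> exists f, J y f.
Proof.
move=> hs y0; have ny : 0 < `|y| by rewrite normr_gt0.
have [f hf] := hs _ (normVZ y0).
have : J (`|y|^-1 *: y) f by rewrite hf.
move=> [[[hl hc] hd] hy]; exists f; split; first by split.
move: hy; rewrite normVZ // linZ // => /(congr1 (fun t => `|y| * t)).
by rewrite mulr1 mulrA mulfV ?gt_eqF // mul1r.
Qed.

Lemma J_uniq (y : X) f g : smooth X -> y != 0 -> J y f -> J y g -> f = g.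
Proof.
move=> hs y0 /(J_scale y0) hf /(J_scale y0) hg.
have [h hh] := hs _ (normVZ y0).
by move: hf hg; rewrite hh => -> ->.
Qed.

Lemma bounded_cont (f : X -> R) : lin f -> (forall x, `|f x| <= `|x|) -> continuous f.
Proof.
move=> hl hb x; apply/cvgrPdist_lt => e e0.
have := @cvg_id _ (nbhs x); move/cvgrPdist_lt => /(_ e e0).
apply: filterS => y hy.
by rewrite -linB //; apply: le_lt_trans (hb _) hy.
Qed.

Lemma dnorm1 (g : X -> R) (u : X) : lin g -> (forall x, `|g x| <= `|x|) ->
  u != 0 -> g u = `|u| -> dnorm g = 1.
Proof.
move=> hl hb u0 hu; set S := [set `|g x| | x in [set x : X | `|x| <= 1]].
have hne : S !=set0 by exists (`|g 0|); exists 0 => //=; rewrite normr0.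
have hub : ubound S 1.
  by move=> _ [x /= hx <-]; apply: le_trans (hb x) hx.
apply/le_anti/andP; split; first exact: ge_sup.
have hs : has_sup S by split => //; exists 1.
apply: (sup_upper_bound hs); exists (`|u|^-1 *: u); first by rewrite /= normVZ.
have ny : 0 < `|u| by rewrite normr_gt0.
by rewrite linZ // hu mulVf ?gt_eqF // normr1.
Qed.


Lemma ultra_fmap (U : set_system nat) (h : nat -> R) :
  UltraFilter U -> UltraFilter (h @ U).
Proof.
move=> UU; split; first exact: fmap_proper_filter.
move=> G PG sG; rewrite predeqE => B; split; last exact: sG.
move=> GB; have [//|hc] := in_ultra_setVsetC (h @^-1` B) UU.
have GC : G (~` B) by apply: sG.
have : G (B `&` ~` B) by exact: filterI.
by rewrite setICr => /filter_ex [].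
Qed.

Lemma limit_fun (fs : nat -> X -> R) : (forall k, lin (fs k)) ->
  (forall k x, `|fs k x| <= `|x|) ->
  exists g, [/\ lin g, (forall x, `|g x| <= `|x|) &
   forall x (P : set R), closed P -> (\forall k \near \oo, P (fs k x)) -> P (g x)].
Proof.
move=> hl hb.
have [U [UU sU]] := @ultraFilterLemma nat (\oo : set_system nat) _.
have ex : forall x, exists p, `[- `|x|, `|x|]%classic p /\ (fun k => fs k x) @ U --> p.
  move=> x; have := @segment_compact R (- `|x|) `|x|.
  rewrite compact_ultra => /(_ _ (ultra_fmap (fun k => fs k x) UU)).
  case.
    apply: sU; apply: filterE => k /=.
    by rewrite in_itv /= -ler_norml.
  by move=> p [hp hc]; exists p.
have [g hg] := choice ex.
exists g; split.
- move=> a x y.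
  have e : (fun k => fs k (a *: x + y)) = (fun k => a * fs k x + fs k y).
    by apply/funext => k; rewrite hl.
  have c1 := (hg (a *: x + y)).2; rewrite e in c1.
  have c2 : (fun k => a * fs k x + fs k y) @ U --> a * g x + g y.
    by apply: cvgD; [apply: cvgMl_tmp; exact: (hg x).2|exact: (hg y).2].
  exact: (cvg_unique (@norm_hausdorff _ _) c1 c2).
- move=> x; have := (hg x).1; rewrite /= in_itv /= -ler_norml //.
- move=> x P cP ev.
  exact: (closed_cvg P cP (sU _ ev) (g x) (hg x).2).
Qed.


Lemma orth_half (u w : X) (f : X -> R) (sg : R) : smooth X -> u != 0 ->
  (sg = 1 \/ sg = -1) -> (forall s : R, `|u| <= `|u + s *: w|) -> J u f ->
  0 <= sg * f w.
Proof.
move=> hs u0 hsg hH hf.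
have sgn : `|sg| = 1 by case: hsg => ->; rewrite ?normrN normr1.
have nu : 0 < `|u| by rewrite normr_gt0.
pose v k := u + (sg / k.+1%:R) *: w.
have v0 k : v k != 0.
  by rewrite -normr_gt0; apply: lt_le_trans nu (hH _).
have /choice [fs hfs] : forall k, exists g, J (v k) g.
  by move=> k; apply: J_ex.
have hl k : lin (fs k) by have [[[]]] := hfs k.
have hb k x : `|fs k x| <= `|x| by apply: bound_sphere; have [] := hfs k.
have fv k : fs k (v k) = `|v k| by have [] := hfs k.
have fsv k : fs k (v k) = fs k u + sg / k.+1%:R * fs k w.
  by rewrite /v linD // linZ.
have kp k : 0 < k.+1%:R :> R by rewrite ltr0Sn.
have sign k : 0 <= sg * fs k w.
  have h1 : fs k u <= `|u| by apply: le_trans (ler_norm _) (hb k u).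
  have h2 : `|u| <= fs k (v k) by rewrite fv; exact: hH.
  have h3 : 0 <= sg / k.+1%:R * fs k w.
    by rewrite -(lerD2l (fs k u)) addr0 -fsv (le_trans h1 h2).
  have -> : sg * fs k w = k.+1%:R * (sg / k.+1%:R * fs k w).
    by field; rewrite gt_eqF.
  by rewrite mulr_ge0 // ltW.
have lower k : `|u| - `|w| / k.+1%:R <= fs k u.
  have h2 : `|u| <= fs k (v k) by rewrite fv; exact: hH.
  have h4 : `|sg / k.+1%:R * fs k w| <= `|w| / k.+1%:R.
    rewrite !normrM sgn mul1r normfV (ger0_norm (ltW (kp k))) mulrC.
    by rewrite ler_pM2r ?invr_gt0 //.
  move: h2 h4; rewrite fsv => h2 /ler_normlW h4.
  by rewrite lerBlDr (le_trans h2) // lerD2l.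
have [g [gl gb gc]] := limit_fun hl hb.
have gu : g u = `|u|.
  apply/le_anti/andP; split; first by apply: le_trans (ler_norm _) (gb u).
  apply/ler_addgt0Pr => e e0.
  rewrite -lerBlDr.
  apply: (gc u [set t | `|u| - e <= t]); first exact: closed_ge.
  have e1 : 0 < e / (`|w| + 1) by rewrite divr_gt0 // ltr_pwDr.
  near=> k.
  apply: le_trans (lower k); rewrite lerD2l lerN2.
  have hk : k.+1%:R^-1 < e / (`|w| + 1).
    by near: k; exact: (near_infty_natSinv_lt (PosNum e1)).
  have : `|w| * k.+1%:R^-1 <= (`|w| + 1) * (e / (`|w| + 1)).
    apply: ler_pM => //; first by rewrite lerDl.
    exact: ltW.
  have w1 : `|w| + 1 != 0 by rewrite gt_eqF // ltr_pwDr.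
  have -> : (`|w| + 1) * (e / (`|w| + 1)) = e by field.
  by [].
have gJ : J u g.
  split => //; split; first by split => //; exact: bounded_cont.
  exact: dnorm1 gu.
rewrite (J_uniq hs u0 hf gJ).
have cP : closed [set t : R | 0 <= sg * t].
  case: hsg => ->.
    rewrite (_ : [set t | 0 <= 1 * t] = [set t | 0 <= t]); first exact: closed_ge.
    by apply/funext => t /=; rewrite mul1r.
  rewrite (_ : [set t | 0 <= -1 * t] = [set t | t <= 0]); first exact: closed_le.
  by apply/funext => t /=; rewrite mulN1r oppr_ge0.
apply: (gc w _ cP); exact: filterE.
Unshelve. all: by end_near.
Qed.

Lemma orth (u w : X) (f : X -> R) : smooth X -> u != 0 ->
  (forall s : R, `|u| <= `|u + s *: w|) -> J u f -> f w = 0.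
Proof.
move=> hs u0 hH hf.
have h1 := orth_half hs u0 (or_introl erefl) hH hf; rewrite mul1r in h1.
have h2 := orth_half hs u0 (or_intror erefl) hH hf; rewrite mulN1r oppr_ge0 in h2.
by apply/le_anti/andP.
Qed.

End PartA.

Section PartB.
Variables (R : realType) (X : normedModType R).

Lemma lin_comb k (c : 'I_k -> R) (s : 'I_k -> X -> R) : (forall i, lin (s i)) ->
  lin (fun x => \sum_(i < k) c i * s i x).
Proof.
move=> h a x y; rewrite mulr_sumr -big_split; apply: eq_bigr => i _.
by rewrite h mulrDr mulrCA.
Qed.

Lemma S_lin (Y : set X) f : J_set Y f -> lin f.
Proof. by move=> [[[]]]. Qed.

Lemma S_bound (Y : set X) f x : J_set Y f -> `|f x| <= `|x|.
Proof. by move=> [hd _]; exact: bound_sphere. Qed.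

Lemma sub_span (S : set X) : S `<=` vspan S.
Proof.
move=> y Sy; exists 1%N, (fun _ => 1), (fun _ => y); split => //.
by rewrite big_ord1 scale1r.
Qed.

Lemma span_sub (Z S : set X) : lin_subspace Z -> S `<=` Z -> vspan S `<=` Z.
Proof.
move=> [Z0 ZL] sSZ _ [k [c [s [Ss ->]]]].
elim: k c s Ss => [|k IH] c s Ss; first by rewrite big_ord0.
rewrite big_ord_recr /= addrC; apply: ZL; first exact: sSZ.
exact: (IH (fun i => c (widen_ord (leqnSn k) i)) (fun i => s (widen_ord (leqnSn k) i))).
Qed.

Lemma Ysub (Y : set X) x y : lin_subspace Y -> Y x -> Y y -> Y (x - y).
Proof.
move=> [Y0 YL] Yx Yy; rewrite addrC -scaleN1r; exact: YL.
Qed.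

Lemma unlift_widen k (i : 'I_k) : unlift ord_max (widen_ord (leqnSn k) i) = Some i.
Proof.
have -> : widen_ord (leqnSn k) i = lift ord_max i.
  by apply: val_inj => /=; rewrite /bump leqNgt ltn_ord.
exact: liftK.
Qed.

Variables (hs : smooth X) (Y : set X) (hY : lin_subspace Y) (n : nat)
  (e : 'I_n -> X) (ei : vlin_indep e) (he : vspan Y = vspan (range e)).

Lemma YE y : Y y <-> exists c : 'I_n -> R, y = \sum_(i < n) c i *: e i.
Proof.
split.
  move=> Yy; have : vspan Y y by exact: sub_span.
  rewrite he; apply: (span_sub (Z := [set z | exists c : 'I_n -> R, z = \sum_(i < n) c i *: e i])).
    split; first by exists (fun _ => 0); rewrite big1 // => i _; rewrite scale0r.
    move=> a _ _ [c ->] [d ->]; exists (fun i => a * c i + d i).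
    rewrite scaler_sumr -big_split; apply: eq_bigr => i _.
    by rewrite scalerDl scalerA.
  move=> _ [i _ <-]; exists (fun j => (j == i)%:R).
  rewrite (bigD1 i) //= eqxx scale1r big1 ?addr0 // => j /negbTE ->.
  by rewrite scale0r.
move=> [c ->]; apply: (span_sub hY (fun y (h : Y y) => h)); rewrite he.
by exists n, c, e; split => // i; exists i.
Qed.

Lemma K1 y : Y y -> y != 0 -> exists f, J_set Y f /\ f y = `|y|.
Proof.
move=> Yy y0; have [f [hd hf]] := J_ex hs y0.
exists f; split => //; split => //; exists y; split => //; split => //.
exact/eqP.
Qed.

Lemma evalS y : Y y -> (forall f, J_set Y f -> f y = 0) -> y = 0.
Proof.
move=> Yy h; apply/eqP; apply: contraT => y0.
have [f [Sf fy]] := K1 Yy y0.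
by move: fy; rewrite h // => /eqP; rewrite eq_sym normr_eq0 (negbTE y0).
Qed.

Lemma coapprox_from x y0 : Y y0 -> (forall f, J_set Y f -> f x = f y0) ->
  best_coapprox Y x y0.
Proof.
move=> Yy0 hf; split => // y Yy.
have Yd : Y (y0 - y) by exact: Ysub.
have [->|d0] := eqVneq (y0 - y) 0; first by rewrite normr0.
have [f [Sf fd]] := K1 Yd d0.
rewrite -fd (linB _ _ (S_lin Sf)) -hf // -(linB _ _ (S_lin Sf)).
exact: le_trans (ler_norm _) (S_bound (x - y) Sf).
Qed.

Lemma dirA : fdim_span (J_set Y) n -> coproximinal Y.
Proof.
move=> [b [bi bs]] x.
have bS i : fspan (J_set Y) (b i).
  rewrite bs; exists 1%N, (fun _ => 1), (fun _ => b i); split => [_|]; first by exists i.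
  by apply/funext => z; rewrite big_ord1 mul1r.
have bl i : lin (b i).
  have [k [c [s [Ss ->]]]] := bS i; apply: lin_comb => l; exact: S_lin (Ss l).
have Sb f : J_set Y f -> forall z w, (forall i, b i z = b i w) -> f z = f w.
  move=> Sf z w hzw.
  have : fspan (J_set Y) f.
    exists 1%N, (fun _ => 1), (fun _ => f); split => [_|] //.
    by apply/funext => t; rewrite big_ord1 mul1r.
  rewrite bs => -[k [c [s [Ss ->]]]] /=.
  apply: eq_bigr => l _; have [i _ <-] := Ss l; by rewrite hzw.
have ker : forall a : 'I_n -> R, (forall j, \sum_i a i * b j (e i) = 0) -> forall i, a i = 0.
  move=> a ha; apply: ei; apply: evalS; first by apply/YE; exists a.
  move=> f Sf; rewrite -(lin0 (S_lin Sf)); apply: Sb => // i.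
  by rewrite linsum // lin0 // ha.
have [a ha] := F2 ker (fun j => b j x).
exists (\sum_i a i *: e i); apply: coapprox_from; first by apply/YE; exists a.
move=> f Sf; apply: Sb => // i; by rewrite linsum // ha.
Qed.

Lemma coprox_eval : coproximinal Y ->
  forall x, exists y0, Y y0 /\ forall f, J_set Y f -> f x = f y0.
Proof.
move=> hc x; have [y0 [Yy0 hb]] := hc x; exists y0; split => // f Sf.
have [_ [u [Yu [u0 Ju]]]] := Sf.
have u0' : u != 0 by exact/eqP.
apply/eqP; rewrite -subr_eq0 -(linB _ _ (S_lin Sf)); apply/eqP.
apply: (orth hs u0' _ Ju) => s.
have [->|s0] := eqVneq s 0; first by rewrite scale0r addr0.
have Yz : Y (y0 - s^-1 *: u).
  apply: Ysub => //; case: hY => Y0 YL; rewrite -[_ *: u]addr0; exact: YL.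
have := hb _ Yz; rewrite opprB addrCA subrr addr0 normrZ normfV.
have sp : 0 < `|s| by rewrite normr_gt0.
rewrite -(ler_pM2l sp) mulrA mulfV ?gt_eqF // mul1r -normrZ.
move=> h; apply: le_trans h _.
by rewrite scalerDr scalerBr scalerA mulfV // scale1r scalerBr addrCA.
Qed.

Lemma greedy k : (k <= n)%N -> exists g : 'I_k -> (X -> R),
  (forall i, J_set Y (g i)) /\
  forall a : 'I_k -> R, (forall j, \sum_i a i * g i (e j) = 0) -> forall i, a i = 0.
Proof.
elim: k => [_|k IH hk].
  by exists (fun _ _ => 0); split => [[]|a _ []].
have [g [gS gI]] := IH (ltnW hk).
have [c [[j0 cj0] hc]] := F1 (fun i j => g i (e j)) hk.
pose y := \sum_j c j *: e j.
have Yy : Y y by apply/YE; exists c.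
have y0 : y != 0.
  by apply/eqP => y0'; move: cj0; rewrite (ei y0') eqxx.
have [f [Sf fy]] := K1 Yy y0.
have gy i : g i y = 0.
  rewrite linsum; last exact: S_lin (gS i).
  by rewrite -[RHS](hc i); apply: eq_bigr => j _; rewrite mulrC.
pose g' := fun i : 'I_k.+1 => if unlift ord_max i is Some i' then g i' else f.
exists g'; split.
  by move=> i; rewrite /g'; case: unlift.
move=> a ha.
have hl' i : lin (g' i) by rewrite /g'; case: unlift => [i'|]; [exact: S_lin (gS i')|exact: S_lin Sf].
pose h := fun x => \sum_i a i * g' i x.
have hl : lin h by exact: lin_comb.
have h0 : h y = 0.
  by rewrite /y linsum // big1 // => j _; rewrite /h ha mulr0.
have hmax : a ord_max = 0.
  move: h0; rewrite /h big_ord_recr /= /g' unlift_none big1 ?add0r.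
    by move/eqP; rewrite mulf_eq0 fy normr_eq0 (negbTE y0) orbF => /eqP.
  by move=> i _; rewrite unlift_widen gy mulr0.
have hw i : a (widen_ord (leqnSn k) i) = 0.
  apply: (gI (fun i => a (widen_ord (leqnSn k) i))) => j.
  have := ha j; rewrite big_ord_recr /= hmax mul0r addr0 => E; rewrite -[RHS]E.
  by apply: eq_bigr => l _; rewrite /g' unlift_widen.
move=> i; case: (unliftP ord_max i) => [i'|] ->; last exact: hmax.
by rewrite -(hw i'); congr a; apply: val_inj => /=; rewrite /bump leqNgt ltn_ord /= add0n.
Qed.

Lemma dirB : coproximinal Y -> fdim_span (J_set Y) n.
Proof.
move=> /coprox_eval C.
have [g [gS gI]] := greedy (leqnn n).
have gl i : lin (g i) by exact: S_lin (gS i).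
have rep s : J_set Y s -> exists d : 'I_n -> R, forall x, s x = \sum_i d i * g i x.
  move=> Ss; have [d hd] := F2 gI (fun j => s (e j)).
  exists d => x; have [y0 [Yy0 hy0]] := C x.
  rewrite (hy0 s Ss).
  under eq_bigr => i _ do rewrite (hy0 _ (gS i)).
  have [c ->] := (YE y0).1 Yy0.
  rewrite linsum; last exact: S_lin Ss.
  under [RHS]eq_bigr => i _ do rewrite linsum // mulr_sumr.
  rewrite exchange_big /=; apply: eq_bigr => j _.
  rewrite -hd mulr_sumr; apply: eq_bigr => i _; by rewrite mulrCA.
exists g; split.
  move=> c hc i; apply: gI => j.
  by have := congr1 (fun h => h (e j)) hc.
apply/seteqP; split.
  move=> _ [k [c [s [Ss ->]]]].
  have /choice [D hD] : forall l, exists d : 'I_n -> R, forall x, s l x = \sum_i d i * g i x.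
    by move=> l; exact: rep.
  exists n, (fun i => \sum_l c l * D l i), g; split => [i|]; first by exists i.
  apply/funext => x.
  under eq_bigr => l _ do rewrite hD mulr_sumr.
  rewrite exchange_big /=; apply: eq_bigr => i _.
  by rewrite mulr_suml; apply: eq_bigr => l _; rewrite mulrA.
move=> _ [k [c [s [Ss ->]]]]; exists k, c, s; split => // l.
by have [i _ <-] := Ss l.
Qed.

End PartB.

Theorem mainTheorem9 (R : realType) (X : completeNormedModType R)
  (Y : set X) (n : nat) :
  smooth X -> lin_subspace Y -> vdim_span Y n ->
  (coproximinal Y <-> fdim_span (J_set Y) n).
Proof.
move=> hs hY [e [ei he]]; split.
  exact: (dirB hs hY ei he).
exact: (dirA hs hY ei he).
Qed.
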